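(* Let $q \equiv 1 \pmod{14}$ be a prime power, let $\rho$ be a primitive element of $\mathbb F_q$, and let $g,h \in (\mathbb Z_2^3)^*$ with $g\neq h$. Then (i) $c^7_q\big(\Psi_1(h-g)-\Psi_1(g),\ \Psi_1(h)-\Psi_1(g)\big) = c^7_q(1,5)$; (ii) $c^7_q\big(\Psi_2(h-g)-\Psi_2(g),\ \Psi_2(h)-\Psi_2(g)\big) = c^7_q(1,3)$.
   Context: $(\mathbb Z_2^3)^* = \mathbb Z_2^3\setminus\{0\}$; elements are written $(x_2,x_1,x_0)$ and $\hat x\in\{0,1\}$ denotes the integer representative of $x\in\mathbb Z_2$. Define $\phi(x_2,x_1,x_0) = \hat x_0 + 2\hat x_1 + 4\hat x_2 \pmod 7$, $\operatorname{wt}(x_2,x_1,x_0) = \hat x_0+\hat x_1+\hat x_2$, $\sigma_+(x_2,x_1,x_0) = (x_1,x_0,x_2)$, $\sigma_-(x_2,x_1,x_0) = (x_0,x_2,x_1)$. Define $\Psi_1,\Psi_2 : (\mathbb Z_2^3)^* \to \mathbb Z_7$ by $\Psi_1(\mathbf x) = \phi(\sigma_+(\mathbf x))$ if $\operatorname{wt}(\mathbf x)$ is odd and $\phi(\sigma_-(\mathbf x))$ if even; $\Psi_2(\mathbf x) = \phi(\sigma_+(\mathbf x)+\mathbf x)$ if $\operatorname{wt}(\mathbf x)$ is odd and $\phi((1,1,1)+\mathbf x)$ if even. Cyclotomic numbers: write $q = 14r+1$; for $i\in\mathbb Z_7$, $C^7_q(i)=\{\rho^{7j+i}: 0\le j\le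 2r-1\}$, and $c^7_q(a,b)=|(C^7_q(a)+1)\cap C^7_q(b)|$ for $a,b\in\mathbb Z_7$. *)

(* Defs.v *)
From HB Require Import structures.
From mathcomp Require Import all_boot all_order all_algebra all_fingroup all_field.
Set Implicit Arguments. Unset Strict Implicit. Unset Printing Implicit Defensive.
Import GRing.Theory.
Local Open Scope ring_scope.

Definition Z23 := ('Z_2 * 'Z_2 * 'Z_2)%type.

Definition z23_zero : Z23 := (0, 0, 0).
Definition z23_add (x y : Z23) : Z23 :=
  let: (x2, x1, x0) := x in let: (y2, y1, y0) := y in (x2 + y2, x1 + y1, x0 + y0).
Definition z23_sub (x y : Z23) : Z23 :=
  let: (x2, x1, x0) := x in let: (y2, y1, y0) := y in (x2 - y2, x1 - y1, x0 - y0).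

Definition hat (x : 'Z_2) : nat := nat_of_ord x.

Definition phi (x : Z23) : 'Z_7 :=
  let: (x2, x1, x0) := x in ((hat x0 + 2 * hat x1 + 4 * hat x2)%N)%:R.

Definition wt (x : Z23) : nat :=
  let: (x2, x1, x0) := x in (hat x0 + hat x1 + hat x2)%N.

Definition sigma_plus (x : Z23) : Z23 := let: (x2, x1, x0) := x in (x1, x0, x2).
Definition sigma_minus (x : Z23) : Z23 := let: (x2, x1, x0) := x in (x0, x2, x1).

Definition Psi1 (x : Z23) : 'Z_7 :=
  if odd (wt x) then phi (sigma_plus x) else phi (sigma_minus x).

Definition Psi2 (x : Z23) : 'Z_7 :=
  if odd (wt x) then phi (z23_add (sigma_plus x) x) else phi (z23_add (1, 1, 1) x).

Definition cycl_r (F : finFieldType) : nat := ((#|F| - 1) %/ 14)%N.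

Definition cycl_class (F : finFieldType) (rho : F) (i : 'Z_7) : {set F} :=
  [set x : F | [exists j : 'I_(2 * cycl_r F), x == rho ^+ (7 * j + i)]].

Definition cycl_num (F : finFieldType) (rho : F) (a b : 'Z_7) : nat :=
  #| [set y + 1 | y in cycl_class rho a] :&: cycl_class rho b |.

(* Main.v *)
Set Warnings "-notation-overridden,-ambiguous-paths".
Require Import Defs.
From HB Require Import structures.
From mathcomp Require Import all_boot all_order all_algebra all_fingroup all_field.
From mathcomp Require Import zify.
Import GRing.Theory.
Local Open Scope ring_scope.

Lemma setup {F : finFieldType} {rho : F} : (#|F| %% 14 = 1)%N -> (#|F|.-1).-primitive_root rho ->
  (#|F|.-1 = 14 * cycl_r F)%N /\ (0 < cycl_r F)%N.
Proof.
move=> hq hp; have n0 := prim_order_gt0 hp.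
rewrite /cycl_r; lia.
Qed.

Lemma zadd (a b : 'Z_7) : nat_of_ord (a + b) = ((a + b) %% 7)%N.
Proof. by []. Qed.
Lemma zopp (a : 'Z_7) : nat_of_ord (- a) = ((7 - a) %% 7)%N.
Proof. by []. Qed.

Section S.
Variables (F : finFieldType) (rho : F).
Hypothesis hq : (#|F| %% 14 = 1)%N.
Hypothesis hp : (#|F|.-1).-primitive_root rho.

Lemma mod7 k : ((k %% #|F|.-1) %% 7 = k %% 7)%N.
Proof.
apply: modn_dvdm; have [-> _] := setup hq hp; exact: dvdn_mulr.
Qed.

Lemma rho_neq0 : rho != 0.
Proof.
apply/eqP=> r0; have n0 := prim_order_gt0 hp; have := prim_expr_order hp.
rewrite r0 expr0n; move: n0; rewrite lt0n => /negbTE -> /eqP.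
by rewrite eq_sym oner_eq0.
Qed.

Lemma memC_intro x k (i : 'Z_7) : x = rho ^+ k -> (k %% 7 = i)%N -> x \in cycl_class rho i.
Proof.
move=> -> hk; rewrite inE; apply/existsP.
have [hn r0] := setup hq hp.
set m := (k %% #|F|.-1)%N.
have hm : (m < 14 * cycl_r F)%N by rewrite -hn /m ltn_pmod // hn; lia.
have hm7 : (m %% 7 = i)%N by rewrite /m mod7.
have hj : (m %/ 7 < 2 * cycl_r F)%N by lia.
exists (Ordinal hj) => /=.
rewrite -(prim_expr_mod hp k) -/m; apply/eqP; congr (_ ^+ _); lia.
Qed.

Lemma memC_elim x (i : 'Z_7) : x \in cycl_class rho i -> exists k, x = rho ^+ k /\ (k %% 7 = i)%N.
Proof.
rewrite inE => /existsP [j /eqP ->]; exists (7 * j + i)%N; split => //.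
have hi : (i < 7)%N := ltn_ord i; lia.
Qed.

Lemma memC_neq0 x i : x \in cycl_class rho i -> x != 0.
Proof. by case/memC_elim => k [-> _]; rewrite expf_neq0 // rho_neq0. Qed.

Arguments memC_neq0 {x i}.
Arguments memC_elim {x i}.

Lemma exp_exists {x} : x != 0 -> exists k, x = rho ^+ k.
Proof.
move=> x0; have h1 : x ^+ #|F|.-1 = 1.
  apply: (mulfI x0); rewrite -exprS mulr1.
  have -> : (#|F|.-1.+1 = #|F|)%N by have := prim_order_gt0 hp; lia.
  exact: expf_card.
by have [i ->] := prim_rootP hp h1; exists i.
Qed.

Lemma exp_uniq k l : rho ^+ k = rho ^+ l -> (k %% 7 = l %% 7)%N.
Proof. by move/eqP; rewrite (eq_prim_root_expr hp) => /eqP h; rewrite -mod7 h mod7. Qed.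

Lemma memC_mul x y a b : x \in cycl_class rho a -> y \in cycl_class rho b ->
  x * y \in cycl_class rho (a + b).
Proof.
case/memC_elim => k [-> hk]; case/memC_elim => l [-> hl].
apply: (memC_intro _ (k + l)%N); first by rewrite exprD.
rewrite zadd; lia.
Qed.

Arguments memC_mul {x y a b}.

Lemma memC_inv x a : x \in cycl_class rho a -> x^-1 \in cycl_class rho (- a).
Proof.
move=> hx; have x0 := memC_neq0 hx.
have [m hm] := exp_exists (invr_neq0 x0).
case/memC_elim: hx => k [hk ha].
have : rho ^+ (k + m) = rho ^+ 0 by rewrite exprD -hk -hm mulfV // expr0.
move/exp_uniq; rewrite mod0n => hkm.
apply: (memC_intro _ _ _ hm); rewrite zopp; have hi : (a < 7)%N := ltn_ord a; lia.
Qed.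

Arguments memC_inv {x a}.

Lemma m1C0 : -1 \in cycl_class rho 0.
Proof.
have [hn r0] := setup hq hp.
apply: (memC_intro _ (7 * cycl_r F)%N); last by rewrite /=; lia.
set y := rho ^+ _.
have y2 : y ^+ 2 == 1.
  rewrite /y -exprM.
  have -> : (7 * cycl_r F * 2 = #|F|.-1)%N by rewrite hn; lia.
  by rewrite prim_expr_order.
move: y2; rewrite sqrf_eq1 => /orP [/eqP y1|/eqP //].
have : rho ^+ (7 * cycl_r F) == rho ^+ 0 by rewrite -/y y1 expr0.
rewrite (eq_prim_root_expr hp) hn mod0n modn_small; lia.
Qed.

Lemma memC_opp x a : x \in cycl_class rho a -> - x \in cycl_class rho a.
Proof.
move=> hx; rewrite -mulN1r.
have := memC_mul m1C0 hx; by rewrite add0r.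
Qed.

Arguments memC_opp {x a}.

Lemma memS (A : {set F}) z : (z \in [set y + 1 | y in A]) = (z - 1 \in A).
Proof.
apply/imsetP/idP => [[y yA ->]| zA]; first by rewrite addrK.
by exists (z - 1) => //; rewrite subrK.
Qed.

Lemma sym1 a b : (cycl_num rho a b <= cycl_num rho b a)%N.
Proof.
rewrite /cycl_num.
set S := _ :&: _.
have inj : injective (fun z : F => 1 - z) by apply: (can_inj (g := fun z : F => 1 - z)) => z; rewrite subKr.
rewrite -(card_imset S inj); apply: subset_leq_card; apply/subsetP => w /imsetP [z].
rewrite inE memS => /andP [h1 h2] ->.
rewrite inE memS; apply/andP; split.
  by rewrite addrC addKr; apply: memC_opp.
by rewrite -opprB; apply: memC_opp.
Qed.

Lemma sym2 a b : (cycl_num rho a b <= cycl_num rho (- a)%R (b - a)%R)%N.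
Proof.
rewrite /cycl_num.
set S := _ :&: _.
have inj : injective (fun z : F => 1 + (z - 1)^-1).
  by move=> z w /addrI /invr_inj /addIr.
rewrite -(card_imset S inj); apply: subset_leq_card; apply/subsetP => w /imsetP [z].
rewrite inE memS => /andP [h1 h2] ->.
rewrite inE memS; apply/andP; split.
  by rewrite [1 + _]addrC addrK; apply: memC_inv.

have u0 := memC_neq0 h1.
have -> : 1 + (z - 1)^-1 = z * (z - 1)^-1.
  by rewrite -{2}(subrK 1 z) mulrDl mulfV // mul1r.
by apply: memC_mul => //; apply: memC_inv.
Qed.

Lemma cS a b : cycl_num rho a b = cycl_num rho b a.
Proof. by apply/anti_leq; rewrite !sym1. Qed.

Lemma cR a b a' b' : a' == - a -> b' == b - a -> cycl_num rho a b = cycl_num rho a' b'.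
Proof.
move=> /eqP -> /eqP ->; apply/anti_leq; rewrite sym2 /=.
by have := sym2 (- a) (b - a); rewrite opprK subrK.
Qed.

End S.
Lemma z2_cases (x : 'Z_2) : x = 0 \/ x = 1.
Proof. case: x => [[|[|n]] p]; [left|right|]; by [apply/val_inj | ]. Qed.

Lemma enum_ok (g h : Z23) : g != z23_zero -> h != z23_zero -> g != h ->
  ((Psi1 (z23_sub h g) - Psi1 g, Psi1 h - Psi1 g) \in [:: (1,5); (5,1); (6,4); (4,6); (3,2); (2,3)])
  && ((Psi2 (z23_sub h g) - Psi2 g, Psi2 h - Psi2 g) \in [:: (1,3); (3,1); (6,2); (2,6); (5,4); (4,5)]).
Proof.
case: g => [[a b] c]; case: h => [[d e] f].
by case: (z2_cases a) => ->; case: (z2_cases b) => ->; case: (z2_cases c) => ->;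
 case: (z2_cases d) => ->; case: (z2_cases e) => ->; case: (z2_cases f) => ->; vm_compute.
Qed.

Lemma orb1 (F : finFieldType) (rho : F) (hq : (#|F| %% 14 = 1)%N)
  (hp : (#|F|.-1).-primitive_root rho) (p : 'Z_7 * 'Z_7) :
  p \in [:: (1,5); (5,1); (6,4); (4,6); (3,2); (2,3)] -> cycl_num rho p.1 p.2 = cycl_num rho 1 5.
Proof.
have R := @cR F rho hq hp; have S := @cS F rho hq hp.
rewrite !inE; case/orP => [/eqP -> //|]; case/orP => [/eqP -> /=|].
  by rewrite S.
case/orP => [/eqP -> /=|]; first by rewrite (R 1 5 6 4).
case/orP => [/eqP -> /=|]; first by rewrite (S 4 6) (R 1 5 6 4).
case/orP => [/eqP -> /=|]; first by rewrite (R 1 5 6 4) // (S 6 4) (R 4 6 3 2).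
move=> /eqP -> /=; by rewrite (S 2 3) (R 1 5 6 4) // (S 6 4) (R 4 6 3 2).
Qed.

Lemma orb2 (F : finFieldType) (rho : F) (hq : (#|F| %% 14 = 1)%N)
  (hp : (#|F|.-1).-primitive_root rho) (p : 'Z_7 * 'Z_7) :
  p \in [:: (1,3); (3,1); (6,2); (2,6); (5,4); (4,5)] -> cycl_num rho p.1 p.2 = cycl_num rho 1 3.
Proof.
have R := @cR F rho hq hp; have S := @cS F rho hq hp.
rewrite !inE; case/orP => [/eqP -> //|]; case/orP => [/eqP -> /=|].
  by rewrite S.
case/orP => [/eqP -> /=|]; first by rewrite (R 1 3 6 2).
case/orP => [/eqP -> /=|]; first by rewrite (S 2 6) (R 1 3 6 2).
case/orP => [/eqP -> /=|]; first by rewrite (R 1 3 6 2) // (S 6 2) (R 2 6 5 4).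
move=> /eqP -> /=; by rewrite (S 4 5) (R 1 3 6 2) // (S 6 2) (R 2 6 5 4).
Qed.

Theorem proposition3p2 (F : finFieldType) (rho : F) (g h : Z23) :
  (#|F| %% 14 = 1)%N ->
  (#|F|.-1).-primitive_root rho ->
  g != z23_zero -> h != z23_zero -> g != h ->
  cycl_num rho (Psi1 (z23_sub h g) - Psi1 g) (Psi1 h - Psi1 g) = cycl_num rho 1 5
  /\
  cycl_num rho (Psi2 (z23_sub h g) - Psi2 g) (Psi2 h - Psi2 g) = cycl_num rho 1 3.
Proof.
move=> hq hp hg hh hgh; have /andP [L1 L2] := enum_ok g h hg hh hgh.
split; [exact: (@orb1 F rho hq hp _ L1) | exact: (@orb2 F rho hq hp _ L2)].
Qed.
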